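(* Let $r<\min\{m,n\}$ and $\mathcal{M}_\mathbb{C}=\{X\in\mathbb{C}^{m\times n}:\operatorname{rank}_\mathbb{C}X\le r\}$. There is a Zariski-open dense set $\mathcal{U}_3\subset\mathcal{M}_\mathbb{C}$ such that for every $X=[x_1\cdots x_n]\in\mathcal{U}_3$, every $j\in[n]$, every set $\mathcal{J}=\{j_1,\dots,j_r\}\subseteq[n]$ of $r$ distinct indices with $j\notin\mathcal{J}$, and every $\Pi_1,\dots,\Pi_r\in\mathcal{P}_m$ not all equal to $I_m$, we have $\operatorname{rank}[x_j\ \Pi_1x_{j_1}\ \cdots\ \Pi_rx_{j_r}]=r+1$.
   Context: $\mathcal{P}_m$ is the set of $m\times m$ permutation matrices, $I_m$ the identity. $\mathcal{M}_\mathbb{C}$ carries the Zariski topology. *)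

(* Defs.v *)
From mathcomp Require Import all_boot all_algebra all_fingroup.
From mathcomp Require Import reals.
From mathcomp.real_closed Require Import complex.
From mathcomp Require Import mpoly.
Set Implicit Arguments. Unset Strict Implicit. Unset Printing Implicit Defensive.
Import GRing.Theory Num.Theory.
Local Open Scope ring_scope.

(* Zariski topology on m x n complex matrices: a matrix X is identified with
   the point of C^(m*n) given by its entries, listed via mxvec. *)
Definition mx_eval (C : comRingType) (m n : nat) (p : {mpoly C[m * n]})
  (X : 'M[C]_(m, n)) : C := p.@[fun k => mxvec X 0 k].

Definition zlocus (C : comRingType) (m n : nat) (S : {mpoly C[m * n]} -> Prop)
  : 'M[C]_(m, n) -> Prop := fun X => forall p, S p -> mx_eval p X = 0.

Definition zopen_in (C : comRingType) (m n : nat) (M U : 'M[C]_(m, n) -> Prop) :=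
  exists S : {mpoly C[m * n]} -> Prop,
    forall X, U X <-> (M X /\ ~ zlocus S X).

(* U is dense in M for the (subspace) Zariski topology: every Zariski-closed
   subset M /\ Z(S) of M that contains U is all of M. *)
Definition zdense_in (C : comRingType) (m n : nat) (M U : 'M[C]_(m, n) -> Prop) :=
  forall S : {mpoly C[m * n]} -> Prop,
    (forall X, U X -> zlocus S X) -> forall X, M X -> zlocus S X.

Definition lemma3_mx (C : comRingType) (m n r : nat) (X : 'M[C]_(m, n))
  (j : 'I_n) (jj : 'I_r -> 'I_n) (s : 'I_r -> 'S_m) : 'M[C]_(m, 1 + r) :=
  row_mx (col j X) (\matrix_(i < m, k < r) (perm_mx (s k) *m col (jj k) X) i 0).

(* Main.v *)
Require Import Defs.
From mathcomp Require Import all_boot all_algebra all_fingroup.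
From mathcomp Require Import reals.
From mathcomp.real_closed Require Import complex.
From mathcomp Require Import mpoly.
Import GRing.Theory Num.Theory.
Local Open Scope ring_scope.
Set Implicit Arguments. Unset Strict Implicit.
From Stdlib Require Import FunctionalExtensionality.

Definition polyF (C : numFieldType) (m n : nat) (F : 'M[C]_(m, n) -> C) :=
  exists p : {mpoly C[m * n]}, forall X, mx_eval p X = F X.

Lemma polyF_const (C : numFieldType) m n (c : C) : polyF (fun _ : 'M[C]_(m,n) => c).
Proof. by exists c%:MP => X; rewrite /mx_eval mevalC. Qed.

Lemma polyF_entry (C : numFieldType) m n i j : polyF (fun X : 'M[C]_(m,n) => X i j).
Proof. by exists 'X_(mxvec_index i j) => X; rewrite /mx_eval mevalXU mxvecE. Qed.

Lemma polyF_add (C : numFieldType) m n (F G : 'M[C]_(m,n) -> C) :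
  polyF F -> polyF G -> polyF (fun X => F X + G X).
Proof. by move=> [p Hp] [q Hq]; exists (p + q) => X; rewrite /mx_eval mevalD -!/(mx_eval _ _) Hp Hq. Qed.

Lemma polyF_mul (C : numFieldType) m n (F G : 'M[C]_(m,n) -> C) :
  polyF F -> polyF G -> polyF (fun X => F X * G X).
Proof. by move=> [p Hp] [q Hq]; exists (p * q) => X; rewrite /mx_eval mevalM -!/(mx_eval _ _) Hp Hq. Qed.

Lemma polyF_sum (C : numFieldType) m n (I : Type) (r : seq I) (P : pred I)
  (F : I -> 'M[C]_(m,n) -> C) :
  (forall i, polyF (F i)) -> polyF (fun X => \sum_(i <- r | P i) F i X).
Proof.
move=> HF; elim: r => [|i r IH].
  by exists 0 => X; rewrite big_nil /mx_eval meval0.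
have [p Hp] := IH; have [q Hq] := HF i.
case Pi: (P i).
  by exists (q + p) => X; rewrite big_cons Pi /mx_eval mevalD -!/(mx_eval _ _) Hp Hq.
by exists p => X; rewrite big_cons Pi.
Qed.

Lemma polyF_prod (C : numFieldType) m n (I : Type) (r : seq I) (P : pred I)
  (F : I -> 'M[C]_(m,n) -> C) :
  (forall i, polyF (F i)) -> polyF (fun X => \prod_(i <- r | P i) F i X).
Proof.
move=> HF; elim: r => [|i r IH].
  by exists 1 => X; rewrite big_nil /mx_eval meval1.
have [p Hp] := IH; have [q Hq] := HF i.
case Pi: (P i).
  by exists (q * p) => X; rewrite big_cons Pi /mx_eval mevalM -!/(mx_eval _ _) Hp Hq.
by exists p => X; rewrite big_cons Pi.
Qed.

Definition polyM (C : numFieldType) m n p q (F : 'M[C]_(m,n) -> 'M[C]_(p,q)) :=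
  forall i j, polyF (fun X => F X i j).

Lemma polyF_det (C : numFieldType) m n k (F : 'M[C]_(m,n) -> 'M[C]_k) :
  polyM F -> polyF (fun X => \det (F X)).
Proof.
move=> HF; rewrite /determinant.
apply: polyF_sum => s; apply: polyF_mul; first exact: polyF_const.
by apply: polyF_prod => i; apply: HF.
Qed.

Lemma polyM_mul (C : numFieldType) m n p q l (F : 'M[C]_(m,n) -> 'M[C]_(p,q))
  (G : 'M[C]_(m,n) -> 'M[C]_(q,l)) :
  polyM F -> polyM G -> polyM (fun X => F X *m G X).
Proof.
move=> HF HG i j.
have -> : (fun X => (F X *m G X) i j) = (fun X => \sum_k F X i k * G X k j).
  by apply: functional_extensionality => X; rewrite mxE.
by apply: polyF_sum => k; apply: polyF_mul.
Qed.



Lemma line_poly (C : numFieldType) m n (p : {mpoly C[m * n]}) (Ct : 'M[{poly C}]_(m, n)) :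
  exists g : {poly C}, forall t, mx_eval p (map_mx (horner_eval t) Ct) = g.[t].
Proof.
exists (mmap (@polyC C) (fun k => mxvec Ct 0 k) p) => t.
rewrite /mx_eval mevalE -horner_evalE /mmap rmorph_sum; apply: eq_bigr => mm _.
rewrite rmorphM /= horner_evalE hornerC /mmap1 rmorph_prod; congr (_ * _).
apply: eq_bigr => k _; rewrite rmorphXn /=; congr (_ ^+ _).
by rewrite -map_mxvec mxE.
Qed.


Lemma poly_nz_pt (C : numFieldType) (g : {poly C}) : g != 0 -> exists t, g.[t] != 0.
Proof.
move=> gn0.
have : ~~ all (root g) [seq i%:R | i <- iota 0 (size g)].
  apply/negP => Hall.
  have := max_poly_roots gn0 Hall.
  rewrite map_inj_uniq ?iota_uniq; last by move=> a b /eqP; rewrite eqr_nat => /eqP.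
  by rewrite size_map size_iota ltnn => /(_ isT).
case/allPn => t _ Ht; by exists t.
Qed.

Lemma poly_all0 (C : numFieldType) (g : {poly C}) : (forall t, g.[t] = 0) -> g = 0.
Proof.
move=> H; apply/eqP/negPn/negP => /poly_nz_pt [t]; by rewrite H eqxx.
Qed.

Lemma factor_rank (C : numFieldType) m n r (X : 'M[C]_(m, n)) : (\rank X <= r)%N ->
  exists (A : 'M[C]_(m, r)) (B : 'M[C]_(r, n)), X = A *m B.
Proof.
move=> Hr.
exists (col_ebase X *m pid_mx (\rank X)), (pid_mx r *m row_ebase X).
rewrite mulmxA -(mulmxA (col_ebase X)) mul_pid_mx.
have -> : minn r (minn (\rank X) r) = \rank X.
  by rewrite (minn_idPl Hr); apply/minn_idPr.
by rewrite mulmx_ebase.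
Qed.

Lemma rank_mul_le (C : numFieldType) m n r (A : 'M[C]_(m, r)) (B : 'M[C]_(r, n)) :
  (\rank (A *m B) <= r)%N.
Proof. exact: leq_trans (mxrankM_maxl _ _) (rank_leq_col _). Qed.

Lemma line_exists (C : numFieldType) m n r (X Y : 'M[C]_(m, n)) :
  (\rank X <= r)%N -> (\rank Y <= r)%N ->
  exists Ct : 'M[{poly C}]_(m, n),
    [/\ map_mx (horner_eval 0) Ct = X, map_mx (horner_eval 1) Ct = Y &
        forall t, (\rank (map_mx (horner_eval t) Ct) <= r)%N].
Proof.
move=> /factor_rank [A0 [B0 ->]] /factor_rank [A1 [B1 ->]].
pose At := \matrix_(i, k) ((A0 i k)%:P + (A1 i k - A0 i k)%:P * 'X).
pose Bt := \matrix_(i, k) ((B0 i k)%:P + (B1 i k - B0 i k)%:P * 'X).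
have Ev : forall t, map_mx (horner_eval t) (At *m Bt) =
   (\matrix_(i, k) (A0 i k + (A1 i k - A0 i k) * t)) *m
   (\matrix_(i, k) (B0 i k + (B1 i k - B0 i k) * t)).
  move=> t; rewrite map_mxM; congr (_ *m _); apply/matrixP => i k;
  by rewrite !mxE /= horner_evalE !hornerE.
exists (At *m Bt); split.
- by rewrite Ev; congr (_ *m _); apply/matrixP => i k; rewrite !mxE mulr0 addr0.
- by rewrite Ev; congr (_ *m _); apply/matrixP => i k; rewrite !mxE mulr1 addrC subrK.
- by move=> t; rewrite Ev rank_mul_le.
Qed.



Lemma polyF_line (C : numFieldType) m n (F : 'M[C]_(m, n) -> C) (Ct : 'M[{poly C}]_(m, n)) :
  polyF F -> exists g : {poly C}, forall t, F (map_mx (horner_eval t) Ct) = g.[t].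
Proof.
move=> [p Hp]; have [g Hg] := line_poly p Ct; exists g => t; by rewrite -Hp.
Qed.

Lemma common_pt (C : numFieldType) m n r (I : Type) (s : seq I) (P : pred I)
  (F : I -> 'M[C]_(m, n) -> C) :
  (forall i, polyF (F i)) ->
  (forall i, P i -> exists X, (\rank X <= r)%N /\ F i X != 0) ->
  exists X, (\rank X <= r)%N /\ \prod_(i <- s | P i) F i X != 0.
Proof.
move=> HF HW; elim: s => [|i s [Y [HY HYn]]].
  by exists 0; rewrite mxrank0 big_nil oner_neq0.
case Pi: (P i); last by exists Y; rewrite big_cons Pi.
have [Z [HZ HZn]] := HW i Pi.
have [Ct [E0 E1 Et]] := line_exists HY HZ.
have [g1 Hg1] := polyF_line Ct (polyF_prod s P HF).
have [g2 Hg2] := polyF_line Ct (HF i).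
have g1n : g1 != 0.
  by apply/eqP => g10; move: HYn; rewrite -E0 Hg1 g10 horner0 eqxx.
have g2n : g2 != 0.
  by apply/eqP => g20; move: HZn; rewrite -E1 Hg2 g20 horner0 eqxx.
have [t Ht] := poly_nz_pt (mulf_neq0 g2n g1n).
exists (map_mx (horner_eval t) Ct); split; first exact: Et.
by rewrite big_cons Pi Hg1 Hg2 -hornerM.
Qed.

Lemma dense_pt (C : numFieldType) m n r (F : 'M[C]_(m, n) -> C) (p : {mpoly C[m * n]})
  (X0 : 'M[C]_(m, n)) :
  polyF F -> (\rank X0 <= r)%N -> F X0 != 0 ->
  (forall X, (\rank X <= r)%N -> F X != 0 -> mx_eval p X = 0) ->
  forall X, (\rank X <= r)%N -> mx_eval p X = 0.
Proof.
move=> HF H0 Hn0 Hv X HX.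
have [Ct [E0 E1 Et]] := line_exists HX H0.
have [f Hf] := polyF_line Ct HF.
have [g Hg] := line_poly p Ct.
have fn : f != 0.
  by apply/eqP => f0; move: Hn0; rewrite -E1 Hf f0 horner0 eqxx.
have gf0 : g * f = 0.
  apply: poly_all0 => t; rewrite hornerM.
  have [ft0|ftn] := eqVneq f.[t] 0; first by rewrite ft0 mulr0.
  by rewrite -Hg Hv ?mul0r ?Hf // Et.
have g0 : g = 0 by move/eqP: gf0; rewrite mulf_eq0 (negbTE fn) orbF => /eqP.
by rewrite -E0 Hg g0 horner0.
Qed.



Lemma sum_delta (C : numFieldType) p (i0 : 'I_p) (F : 'I_p -> C) :
  (forall i, i != i0 -> F i = 0) -> \sum_i F i = F i0.
Proof. by move=> H; rewrite (bigD1 i0) //= big1 ?addr0 // => i /H. Qed.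

Lemma witness (C : numFieldType) m n r (hr : (r < minn m n)%N) (j : 'I_n)
  (jj : 'I_r -> 'I_n) (s : 'I_r -> 'S_m) :
  injective jj -> (forall k, jj k != j) -> (exists k, s k != 1%g) ->
  exists X : 'M[C]_(m, n), (\rank X <= r)%N /\
    \det ((lemma3_mx X j jj s)^T *m lemma3_mx X j jj s) != 0.
Proof.
move=> injj jjn [k0 Hk0].
have : ~~ [forall a, s k0 a == a].
  apply: contra Hk0 => /forallP H; apply/eqP/permP => a; rewrite perm1; exact/eqP/H.
rewrite negb_forall => /existsP [a Ha].
have Hm : (1 + r <= m)%N by move: hr; rewrite leq_min => /andP [].
pose w (u : 'I_(1 + r)) := widen_ord Hm u.
pose u0 : 'I_(1 + r) := ord0.
pose u1 : 'I_(1 + r) := lift ord0 k0.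
pose b := s k0 a.
pose rho := tperm (w u0) b.
pose c := rho (w u1).
pose sig := (rho * tperm c a)%g.
pose pos u := sig (w u).
have winj : injective w by move=> x y /(congr1 val) /= /val_inj.
have cb : c != b.
  rewrite /c -(tpermL (w u0) b) -/rho (inj_eq perm_inj) (inj_eq winj).
  by apply/eqP => /(congr1 val).
have posinj : injective pos by move=> x y /perm_inj /winj.
have pos0 : pos u0 = b.
  rewrite /pos /sig permM /rho tpermL tpermD //; by rewrite eq_sym.
have pos1 : pos u1 = a by rewrite /pos /sig permM -/c tpermL.
pose A : 'M[C]_(m, r) := \matrix_(i, k) (i == s k (pos (lift ord0 k)))%:R.
pose B : 'M[C]_(r, n) := \matrix_(k, l) ((jj k == l) || ((l == j) && (k == k0)))%:R.
exists (A *m B); split; first exact: rank_mul_le.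
have HY : lemma3_mx (A *m B) j jj s = \matrix_(i, u) (i == pos u)%:R.
  apply/matrixP => i u; rewrite /lemma3_mx mxE.
  case: (splitP u) => [k Hk|k Hk].
    have -> : u = u0 by apply/val_inj; rewrite /= Hk; case: k {Hk} => [[]].
    rewrite !mxE (sum_delta (i0:=k0)); last first.
      by move=> k' Hk'; rewrite !mxE (negbTE (jjn k')) eqxx (negbTE Hk') mulr0.
    by rewrite !mxE (negbTE (jjn k0)) !eqxx mulr1 -/u1 pos1 pos0.
  have -> : u = lift ord0 k by apply/val_inj; rewrite /= Hk.
  rewrite [in LHS]mxE -row_permE !mxE (sum_delta (i0:=k)); last first.
    move=> k' Hk'; rewrite !mxE (inj_eq injj) (negbTE Hk').
    by rewrite (negbTE (jjn k)) mulr0.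
  by rewrite !mxE eqxx mulr1 (inj_eq perm_inj).
have -> : (lemma3_mx (A *m B) j jj s)^T *m lemma3_mx (A *m B) j jj s = 1%:M.
  apply/matrixP => u v; rewrite HY !mxE (sum_delta (i0:=(pos u))); last first.
    by move=> i Hi; rewrite !mxE (negbTE Hi) mul0r.
  by rewrite !mxE eqxx mul1r (inj_eq posinj).
by rewrite det1 oner_neq0.
Qed.



Lemma polyF_ext (C : numFieldType) m n (F G : 'M[C]_(m, n) -> C) :
  polyF F -> (forall X, F X = G X) -> polyF G.
Proof. by move=> [p Hp] H; exists p => X; rewrite Hp H. Qed.

Lemma polyM_tr (C : numFieldType) m n p q (F : 'M[C]_(m, n) -> 'M[C]_(p, q)) :
  polyM F -> polyM (fun X => (F X)^T).
Proof. by move=> HF i j; apply: polyF_ext (HF j i) _ => X; rewrite mxE. Qed.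

Lemma polyM_lemma3 (C : numFieldType) m n r j (jj : 'I_r -> 'I_n) (s : 'I_r -> 'S_m) :
  polyM (fun X : 'M[C]_(m, n) => lemma3_mx X j jj s).
Proof.
move=> i u; case: (splitP u) => [k Hk|k Hk].
  have -> : u = lshift r k by apply/val_inj; rewrite /= Hk.
  by apply: polyF_ext (polyF_entry _ i j) _ => X; rewrite /lemma3_mx row_mxEl mxE.
have -> : u = rshift 1 k by apply/val_inj; rewrite /= Hk.
apply: (polyF_ext (F := fun X : 'M[C]_(m, n) => \sum_l perm_mx (s k) i l * X l (jj k))).
  apply: polyF_sum => l; apply: polyF_mul; [exact: polyF_const | exact: polyF_entry].
move=> X; rewrite /lemma3_mx row_mxEr !mxE; apply: eq_bigr => l _; by rewrite !mxE.
Qed.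



Theorem lemma3 (R : realType) (m n r : nat) (hr : (r < minn m n)%N) :
  let M := fun X : 'M[R[i]]_(m, n) => (\rank X <= r)%N in
  exists U : 'M[R[i]]_(m, n) -> Prop,
    zopen_in M U /\ zdense_in M U /\
    forall X, U X ->
    forall (j : 'I_n) (jj : 'I_r -> 'I_n), injective jj ->
    (forall k, jj k != j) ->
    forall s : 'I_r -> 'S_m, (exists k, perm_mx (s k) <> 1%:M :> 'M[R[i]]_m) ->
      \rank (lemma3_mx X j jj s) = (r + 1)%N.
Proof.
move=> M.
pose T := ('I_n * {ffun 'I_r -> 'I_n} * {ffun 'I_r -> 'S_m})%type.
pose good (t : T) : bool :=
  [&& [forall k, t.1.2 k != t.1.1], injectiveb t.1.2 & [exists k, t.2 k != 1%g]].
pose Q (t : T) (X : 'M[R[i]]_(m, n)) :=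
  \det ((lemma3_mx X t.1.1 t.1.2 t.2)^T *m lemma3_mx X t.1.1 t.1.2 t.2).
pose PF X := \prod_(t | good t) Q t X.
have HQ : forall t, polyF (Q t).
  move=> t; apply: polyF_det; apply: polyM_mul; last exact: polyM_lemma3.
  by apply: polyM_tr; exact: polyM_lemma3.
have HPF : polyF PF by apply: polyF_prod.
have [P HP] := HPF.
exists (fun X => M X /\ PF X != 0); split; last split.
- exists (fun p => p = P) => X; split.
    move=> [MX HX]; split => // Hz; move: HX; by rewrite -HP (Hz P erefl) eqxx.
  move=> [MX HX]; split => //; apply/eqP => H0; apply: HX => p ->; by rewrite HP.
- move=> S HS X MX p Sp.
  have [X0 [HX0 HX0n]] : exists X, (\rank X <= r)%N /\ PF X != 0.
    apply: common_pt => // t /and3P [/forallP H1 /injectiveP H2 /existsP [k Hk]].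
    exact: witness hr _ _ _ H2 H1 (ex_intro _ k Hk).
  apply: (dense_pt HPF HX0 HX0n) => // Y HY HYn.
  exact: (HS Y (conj HY HYn) p Sp).
- move=> X [MX HX] j jj injj jjn s [k Hk].
  pose t : T := (j, finfun jj, finfun s).
  have EL : lemma3_mx X j (finfun jj) (finfun s) = lemma3_mx X j jj s.
    by congr (lemma3_mx X j _ _); apply: functional_extensionality => x; rewrite ffunE.
  have gt : good t.
    apply/and3P; split.
    - by apply/forallP => k' /=; rewrite ffunE.
    - by apply/injectiveP => x y /=; rewrite !ffunE => /injj.
    - apply/existsP; exists k => /=; rewrite ffunE; apply/eqP => e; apply: Hk.
      by rewrite e perm_mx1.
  have := (prodf_neq0 _ _ HX) t gt.
  rewrite /Q EL.
  move=> Hdet.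
  have Hu : (lemma3_mx X j jj s)^T *m lemma3_mx X j jj s \in unitmx.
    by rewrite unitmxE unitfE.
  transitivity (1 + r)%N; last by rewrite addnC.
  apply/eqP; rewrite eqn_leq rank_leq_col /=.
  by rewrite -{1}(mxrank_unit Hu) mxrankM_maxr.
Qed.
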